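(* Let $A$ be a fuzzy ideal in a fuzzy Riesz space $(E,\mu)$, and let $E/A$ carry the quotient fuzzy order described in the context. The following are equivalent: (1) $E/A$ is a fuzzy Archimedean space; (2) $A$ is uniformly fuzzy closed; (3) whenever $\{x_n\}\subseteq A$ with $\mu(0,x_n)>\frac12$ for all $n$, the sequence $\{x_n\}$ is increasing and converges relatively uniformly in fuzzy order to $x\in E$, then $x\in A$; (4) whenever $x,w\in E^+$ and $(nx-w)^+\in A$ for all $n=1,2,\dots$, then $x\in A$.
   Context: A fuzzy order on a real vector space $E$ is a map $\mu:E\times E\to[0,1]$ with $\mu(x,x)=1$; $\mu(x,y)+\mu(y,x)>1$ implies $x=y$; and $\mu(x,z)\ge\sup_{y}\min(\mu(x,y),\mu(y,z))$. Write $x\le y$ for $\mu(x,y)>\frac12$; upper bounds, suprema and infima are taken with respect to this relation. $(E,\mu)$ is a fuzzy ordered linear space if $\mu(x_1,x_2)>\frac12$ implies $\mu(x_1,x_2)\le\mu(x_1+x,x_2+x)$ for all $x$ and $\mu(x_1,x_2)\le\mu(\alpha x_1,\alpha x_2)$ for all $\alpha>0$; it is a fuzzy Riesz space if $x\vee y=\sup\{x,y\}$ and $x\wedge y=\inf\{x,y\}$ exist for all $x,y$. $E^+=\{x:0\le x\}$, $x^+=x\vee0$, $|x|=x\vee(-x)$. A fuzzy ideal is a vector subspace $A$ such that $\mu(|x|,|y|)>\frac12$ and $y\in A$ imply $x\in A$. For $f\in E$, $[f]=f+A$; on the quotient vector space $E/A$ put $\nu([f],[g])=1$ if $[f]=[g]$,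 $\nu([f],[g])=\frac23$ if $[f]\neq[g]$ and there exist $f_1\in[f]$, $g_1\in[g]$ with $\mu(f_1,g_1)>\frac12$, and $\nu([f],[g])=0$ otherwise; $(E/A,\nu)$ is a fuzzy Riesz space. A fuzzy ordered vector space (in which every pair of elements has an upper bound) is fuzzy Archimedean if for every nonzero $x$ with $0\le x$ the set $\{\lambda x:\lambda>0\}$ is not bounded above. A sequence $\{x_n\}$ converges relatively uniformly in fuzzy order to $x$ if there is $w\in E^+$ such that for every $\varepsilon>0$ there is $n(\varepsilon)$ with $\mu(|x-x_n|,\varepsilon w)>\frac12$ for all $n>n(\varepsilon)$. A set $A$ is uniformly fuzzy closed if it contains the limit of every sequence in $A$ converging relatively uniformly in fuzzy order. *)

(* Defs.v *)
From HB Require Import structures.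
From mathcomp Require Import all_boot all_order all_algebra.
From mathcomp Require Import boolp classical_sets reals.
Set Implicit Arguments. Unset Strict Implicit. Unset Printing Implicit Defensive.
Import Order.TTheory GRing.Theory Num.Theory.
Local Open Scope ring_scope.
Local Open Scope classical_set_scope.

Section FuzzyDefs.
Variables (R : realType) (E : lmodType R).
Implicit Types (mu : E -> E -> R) (A : set E).

(* mu is a fuzzy order: values in [0,1]; mu(x,x)=1;
   mu(x,y)+mu(y,x)>1 -> x=y; mu(x,z) >= sup_y min(mu(x,y),mu(y,z))
   (the sup-inequality written as "for every y"). *)
Definition fuzzy_order mu : Prop :=
  [/\ forall x y, 0 <= mu x y <= 1,
      forall x, mu x x = 1,
      forall x y, mu x y + mu y x > 1 -> x = y &
      forall x y z, Num.min (mu x y) (mu y z) <= mu x z].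

Definition fle mu x y : Prop := mu x y > 2^-1.

Definition is_fsup mu (S : set E) (s : E) : Prop :=
  (forall a, S a -> fle mu a s) /\
  (forall u, (forall a, S a -> fle mu a u) -> fle mu s u).

Definition is_finf mu (S : set E) (s : E) : Prop :=
  (forall a, S a -> fle mu s a) /\
  (forall u, (forall a, S a -> fle mu u a) -> fle mu u s).

Definition fuzzy_ordered_linear mu : Prop :=
  fuzzy_order mu /\
  (forall x1 x2, fle mu x1 x2 ->
     (forall x, mu x1 x2 <= mu (x1 + x) (x2 + x)) /\
     (forall a : R, 0 < a -> mu x1 x2 <= mu (a *: x1) (a *: x2))).

Definition fuzzy_riesz mu : Prop :=
  fuzzy_ordered_linear mu /\
  (forall x y, (exists s, is_fsup mu [set x; y] s) /\
               (exists i, is_finf mu [set x; y] i)).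

(* x \/ y, x^+ = x \/ 0, |x| = x \/ (-x)  (the sup is unique, chosen by xget) *)
Definition fjoin mu x y : E := xget 0 (is_fsup mu [set x; y]).
Definition fpos mu x : E := fjoin mu x 0.
Definition fabs mu x : E := fjoin mu x (- x).

Definition vsubspace A : Prop :=
  [/\ A 0, forall x y, A x -> A y -> A (x + y) &
      forall (a : R) x, A x -> A (a *: x)].

Definition fuzzy_ideal mu A : Prop :=
  vsubspace A /\
  (forall x y, fle mu (fabs mu x) (fabs mu y) -> A y -> A x).

(* The quotient fuzzy order nu on E/A, written on representatives:
   nu([f],[g]) = 1 if [f]=[g]; 2/3 if [f]<>[g] and there are f1 in [f],
   g1 in [g] with mu(f1,g1) > 1/2; 0 otherwise. *)
Definition quot_mu mu A (f g : E) : R :=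
  if `[< A (f - g) >] then 1
  else if `[< exists f1 g1, A (f1 - f) /\ A (g1 - g) /\ fle mu f1 g1 >]
       then 2 / 3 else 0.

(* Fuzzy Archimedean property for a fuzzy order nu on a vector space whose
   equality is eqv (eqv = (=) for E itself, eqv = congruence mod A for E/A):
   for every nonzero x with 0 <= x, {lambda x : lambda > 0} has no upper bound. *)
Definition fuzzy_archimedean_wrt (eqv : E -> E -> Prop) (nu : E -> E -> R) : Prop :=
  forall x, ~ eqv x 0 -> fle nu 0 x ->
    ~ (exists u, forall l : R, 0 < l -> fle nu (l *: x) u).

Definition quot_fuzzy_archimedean mu A : Prop :=
  fuzzy_archimedean_wrt (fun f g => A (f - g)) (quot_mu mu A).

Definition ru_conv mu (xs : nat -> E) (x : E) : Prop :=
  exists w, fle mu 0 w /\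
    forall eps : R, 0 < eps -> exists N : nat, forall n : nat, (N < n)%N ->
      fle mu (fabs mu (x - xs n)) (eps *: w).

Definition uniformly_fuzzy_closed mu A : Prop :=
  forall (xs : nat -> E) (x : E), (forall n, A (xs n)) -> ru_conv mu xs x -> A x.

End FuzzyDefs.

(* Main.v *)
Require Import Defs.
From HB Require Import structures.
From mathcomp Require Import all_boot all_order all_algebra.
From mathcomp Require Import boolp classical_sets reals.
From mathcomp Require Import lra.
Set Implicit Arguments. Unset Strict Implicit. Unset Printing Implicit Defensive.
Import Order.TTheory GRing.Theory Num.Theory.
Local Open Scope ring_scope.

Section Aux.
Variables (R : realType) (E : lmodType R) (mu : E -> E -> R).
Hypothesis Hr : fuzzy_riesz mu.
Local Notation le := (fle mu).

Lemma fle_refl x : le x x.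
Proof. case: Hr => [[[_ H _ _] _] _]; rewrite /fle H; lra. Qed.

Lemma fle_trans x y z : le x y -> le y z -> le x z.
Proof.
case: Hr => [[[_ _ _ H] _] _]; rewrite /fle => h1 h2.
apply: lt_le_trans (H x y z); by rewrite lt_min h1 h2.
Qed.

Lemma fle_anti x y : le x y -> le y x -> x = y.
Proof. case: Hr => [[[_ _ H _] _] _]; rewrite /fle => h1 h2; apply: H; lra. Qed.

Lemma le_add x y z : le x y -> le (x + z) (y + z).
Proof. case: Hr => [[_ H] _] h; have [H1 _] := H _ _ h; exact: lt_le_trans h (H1 z). Qed.

Lemma le_scale a x y : 0 < a -> le x y -> le (a *: x) (a *: y).
Proof. case: Hr => [[_ H] _] a0 h; have [_ H1] := H _ _ h; exact: lt_le_trans h (H1 a a0). Qed.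

Lemma le_add2 a b c d : le a b -> le c d -> le (a + c) (b + d).
Proof.
move=> h1 h2; apply: fle_trans (le_add c h1) _.
by rewrite (addrC b) (addrC b); apply: le_add.
Qed.

Lemma le_opp x y : le x y -> le (- y) (- x).
Proof.
move=> h; have := le_add (- x - y) h.
by rewrite addrA subrr add0r addrCA subrr addr0.
Qed.

Lemma le_scale0 a x : 0 < a -> le 0 x -> le 0 (a *: x).
Proof. move=> a0 h; have := le_scale a0 h; by rewrite scaler0. Qed.

Lemma le_scale0w a x : 0 <= a -> le 0 x -> le 0 (a *: x).
Proof.
rewrite le0r => /orP [/eqP ->|a0] h; first by rewrite scale0r; apply: fle_refl.
exact: le_scale0.
Qed.

Lemma le_subl a b c : le a (b + c) -> le (a - c) b.
Proof. move=> h; have := le_add (- c) h; by rewrite addrK. Qed.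

Lemma le_subr a b c : le (a - c) b -> le a (b + c).
Proof. move=> h; have := le_add c h; by rewrite subrK. Qed.

Lemma fjoinP x y : is_fsup mu [set x; y] (fjoin mu x y).
Proof.
rewrite /fjoin; case: Hr => [_ H]; have [[s hs] _] := H x y.
exact: (xgetPex 0 (ex_intro _ s hs)).
Qed.

Lemma join_ubl x y : le x (fjoin mu x y).
Proof. have [h _] := fjoinP x y; apply: h; by left. Qed.
Lemma join_ubr x y : le y (fjoin mu x y).
Proof. have [h _] := fjoinP x y; apply: h; by right. Qed.
Lemma join_lub x y u : le x u -> le y u -> le (fjoin mu x y) u.
Proof. move=> h1 h2; have [_ h] := fjoinP x y; by apply: h => a [->|->]. Qed.

Lemma abs_ge x : le x (fabs mu x).
Proof. exact: join_ubl. Qed.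
Lemma abs_geN x : le (- x) (fabs mu x).
Proof. exact: join_ubr. Qed.
Lemma abs_lub x u : le x u -> le (- x) u -> le (fabs mu x) u.
Proof. exact: join_lub. Qed.

Lemma abs_ge0 x : le 0 (fabs mu x).
Proof.
have h := le_add2 (abs_ge x) (abs_geN x); rewrite subrr in h.
have two : (0:R) < 2^-1 by lra.
have := le_scale0 two h.
rewrite -[fabs mu x + _](scaler_nat 2) ?mulr2n // scalerA mulVf ?scale1r //.
by rewrite paddr_eq0 ?ler01 // oner_eq0.
Qed.

Lemma abs_of_ge0 z : le 0 z -> fabs mu z = z.
Proof.
move=> h; apply: fle_anti; last exact: abs_ge.
apply: abs_lub; first exact: fle_refl.
have h2 := le_opp h; rewrite oppr0 in h2; exact: fle_trans h2 h.
Qed.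

Lemma abs_abs x : fabs mu (fabs mu x) = fabs mu x.
Proof. exact/abs_of_ge0/abs_ge0. Qed.

Lemma abs_tri x y : le (fabs mu (x + y)) (fabs mu x + fabs mu y).
Proof.
apply: abs_lub; first exact: le_add2 (abs_ge x) (abs_ge y).
rewrite opprD; exact: le_add2 (abs_geN x) (abs_geN y).
Qed.

Lemma pos_ge z : le z (fpos mu z).
Proof. exact: join_ubl. Qed.
Lemma pos_ge0 z : le 0 (fpos mu z).
Proof. exact: join_ubr. Qed.
Lemma pos_lub z u : le z u -> le 0 u -> le (fpos mu z) u.
Proof. exact: join_lub. Qed.

Variable A : set E.
Hypothesis Hi : fuzzy_ideal mu A.

Lemma A0 : A 0.
Proof. by case: Hi => [[]]. Qed.
Lemma AD x y : A x -> A y -> A (x + y).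
Proof. by case: Hi => [[_ H _] _]; apply: H. Qed.
Lemma AZ (a : R) x : A x -> A (a *: x).
Proof. by case: Hi => [[_ _ H] _]; apply: H. Qed.
Lemma AN x : A x -> A (- x).
Proof. move=> h; rewrite -scaleN1r; exact: AZ. Qed.
Lemma AB x y : A x -> A y -> A (x - y).
Proof. by move=> h1 h2; apply: AD => //; apply: AN. Qed.
Lemma Aideal x y : le (fabs mu x) (fabs mu y) -> A y -> A x.
Proof. by case: Hi => [_ H]; apply: H. Qed.
Lemma A_abs y : A y -> A (fabs mu y).
Proof. apply: Aideal; rewrite abs_abs; exact: fle_refl. Qed.
Lemma A_of_abs x : A (fabs mu x) -> A x.
Proof. apply: Aideal; rewrite abs_abs; exact: fle_refl. Qed.

Lemma quotP f g :
  (exists f1 g1, A (f1 - f) /\ A (g1 - g) /\ le f1 g1) <-> fle (quot_mu mu A) f g.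
Proof.
have c1 : (2^-1 : R) < 1 by lra.
have c2 : (2^-1 : R) < 2 / 3 by lra.
have c3 : ~ ((2^-1 : R) < 0) by lra.
rewrite {2}/fle /quot_mu; split.
  move=> h; case: (asboolP (A (f - g))) => _ //.
  by case: (asboolP (exists f1 g1, A (f1 - f) /\ A (g1 - g) /\ le f1 g1)).
case: (asboolP (A (f - g))) => h1.
  move=> _; exists g, g; split; first by rewrite -opprB; apply: AN.
  by split; [rewrite subrr; apply: A0 | apply: fle_refl].
case: (asboolP (exists f1 g1, A (f1 - f) /\ A (g1 - g) /\ le f1 g1)) => [h2 _|_ /= h3] //.
Qed.

Lemma imp12 : quot_fuzzy_archimedean mu A -> uniformly_fuzzy_closed mu A.
Proof.
move=> Harch xs x HA [w [w0 Hw]].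
apply: A_of_abs; apply: contrapT => nAx.
apply: (Harch (fabs mu x)).
- by rewrite subr0.
- apply/quotP; exists 0, (fabs mu x); rewrite !subrr.
  by split; [exact: A0 | split; [exact: A0 | exact: abs_ge0]].
- exists w => l l0; apply/quotP.
  have li : 0 < l^-1 by rewrite invr_gt0.
  have [N HN] := Hw l^-1 li.
  have h := HN N.+1 (ltnSn N).
  have t1 : le (fabs mu x) (l^-1 *: w + fabs mu (xs N.+1)).
    apply: fle_trans (le_add (fabs mu (xs N.+1)) h).
    by have := abs_tri (x - xs N.+1) (xs N.+1); rewrite subrK.
  have t2 := le_scale l0 t1.
  rewrite scalerDr scalerA mulfV ?gt_eqF // scale1r in t2.
  have t3 := le_subl t2.
  exists (l *: fabs mu x - l *: fabs mu (xs N.+1)), w.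
  split; last split => //.
    by rewrite addrAC subrr add0r; apply/AN/AZ/A_abs/HA.
  by rewrite subrr; apply: A0.
Qed.

Lemma imp34 : (forall (xs : nat -> E) (x : E), (forall n, A (xs n)) ->
   (forall n, mu 0 (xs n) > 2^-1) ->
   (forall m n, (m <= n)%N -> fle mu (xs m) (xs n)) -> ru_conv mu xs x -> A x) ->
  forall x w : E, fle mu 0 x -> fle mu 0 w ->
         (forall n : nat, (1 <= n)%N -> A (fpos mu (n%:R *: x - w))) -> A x.
Proof.
move=> H3 x w x0 w0 Hn.
pose p n := fpos mu (n.+1%:R *: x - w).
pose xs n := (n.+1%:R : R)^-1 *: p n.
have cpos n : (0 : R) < n.+1%:R by rewrite ltr0Sn.
have cipos n : (0 : R) < (n.+1%:R)^-1 by rewrite invr_gt0.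
have xs_le n : le (xs n) x.
  have : le (p n) (n.+1%:R *: x).
    apply: pos_lub; last exact: le_scale0.
    apply: le_subl.
    by have := le_add2 (fle_refl (n.+1%:R *: x)) w0; rewrite addr0.
  move=> h; have := le_scale (cipos n) h.
  by rewrite scalerA mulVf ?gt_eqF // scale1r.
have xs_ge n : le (x - (n.+1%:R)^-1 *: w) (xs n).
  have := le_scale (cipos n) (pos_ge (n.+1%:R *: x - w)).
  by rewrite scalerBr scalerA mulVf ?gt_eqF // scale1r.
have mono m n : (m <= n)%N -> le (xs m) (xs n).
  move=> mn; set cm := (m.+1%:R : R); set cn := (n.+1%:R : R).
  have d0 : 0 < cm / cn by rewrite divr_gt0.
  have d1 : cm / cn <= 1 by rewrite ler_pdivrMr // mul1r ler_nat.
  have h : le (p m) ((cm / cn) *: p n).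
    apply: pos_lub; last exact: le_scale0 d0 (pos_ge0 _).
    have t := le_scale d0 (pos_ge (n.+1%:R *: x - w)).
    apply: fle_trans t; rewrite scalerBr scalerA divfK ?gt_eqF //.
    apply: le_add2; first exact: fle_refl.
    apply: le_opp.
    have d2 : 0 <= 1 - cm / cn by rewrite subr_ge0.
    have t := le_add ((cm / cn) *: w) (le_scale0w d2 w0).
    by rewrite add0r -scalerDl subrK scale1r in t.
  have := le_scale (cipos m) h.
  by rewrite scalerA mulKf ?gt_eqF.
apply: (H3 xs x).
- by move=> n; apply: AZ; apply: Hn.
- by move=> n; apply: le_scale0 (cipos n) (pos_ge0 _).
- exact: mono.
exists w; split => // eps e0.
have ie : (0:R) <= eps^-1 by rewrite invr_ge0 ltW.
have eb := archi_boundP ie.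
exists (Num.bound eps^-1) => n kn.
have cn_gt : eps^-1 < n.+1%:R.
  apply: lt_le_trans eb _; rewrite ler_nat; exact: leq_trans (ltnW kn) (leqnSn n).
have lt : (n.+1%:R : R)^-1 < eps.
  by rewrite -(invrK eps) ltf_pV2 ?posrE ?invr_gt0.
apply: (@fle_trans _ ((n.+1%:R)^-1 *: w)).
  apply: abs_lub.
    apply: le_subl; rewrite addrC; apply: le_subr; exact: xs_ge.
  have t := le_add (- xs n) (xs_le n); rewrite subrr in t.
  have t2 := le_opp t; rewrite oppr0 in t2.
  exact: fle_trans t2 (le_scale0 (cipos n) w0).
have d2 : 0 < eps - (n.+1%:R)^-1 by rewrite subr_gt0.
have t := le_add ((n.+1%:R)^-1 *: w) (le_scale0 d2 w0).
by rewrite add0r -scalerDl subrK in t.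
Qed.

Lemma imp41 : (forall x w : E, fle mu 0 x -> fle mu 0 w ->
         (forall n : nat, (1 <= n)%N -> A (fpos mu (n%:R *: x - w))) -> A x) ->
   quot_fuzzy_archimedean mu A.
Proof.
move=> H4 x nAx /quotP [f1 [g1 [Af1 [Ag1 le1]]]] [u Hu].
rewrite subr0 in Af1.
pose y := g1 - f1.
have y0 : le 0 y by have := le_add (- f1) le1; rewrite subrr.
have Ayx : A (y - x).
  have -> : y - x = (g1 - x) - f1 by rewrite /y addrAC.
  exact: AB.
apply: nAx; rewrite subr0.
have Ay : A y.
  apply: (H4 y (fabs mu u) y0 (abs_ge0 u)) => n n1.
  have n0 : (0:R) < n%:R by rewrite ltr0n.
  have /quotP [a [b [Aa [Ab leab]]]] := Hu n%:R n0.
  pose c := (b - u) + (n%:R *: y - a).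
  have Ac : A c.
    apply: AD => //.
    have -> : n%:R *: y - a = n%:R *: (y - x) - (a - n%:R *: x).
      by rewrite [n%:R *: (y - x)]scalerBr opprB addrA subrK.
    by apply: AB; [exact: AZ | exact: Aa].
  have t : le (n%:R *: y) (fabs mu u + c).
    have t1 := le_add (n%:R *: y - a) leab.
    rewrite [a + _]addrC subrK in t1.
    have e : b + (n%:R *: y - a) = u + c by rewrite /c [u + _]addrA [u + (b - u)]addrC subrK.
    rewrite e in t1; exact: fle_trans t1 (le_add c (abs_ge u)).
  apply: (@Aideal _ c) => //.
  rewrite abs_of_ge0; last exact: pos_ge0.
  apply: pos_lub; last exact: abs_ge0.
  apply: fle_trans (abs_ge c).
  by apply: le_subl; rewrite addrC.
rewrite -(subKr y x); exact: AB.
Qed.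

End Aux.

Theorem theorem3p8 (R : realType) (E : lmodType R) (mu : E -> E -> R) (A : set E) :
  fuzzy_riesz mu -> fuzzy_ideal mu A ->
  [<-> quot_fuzzy_archimedean mu A;
       uniformly_fuzzy_closed mu A;
       forall (xs : nat -> E) (x : E),
         (forall n, A (xs n)) ->
         (forall n, mu 0 (xs n) > 2^-1) ->
         (forall m n, (m <= n)%N -> fle mu (xs m) (xs n)) ->
         ru_conv mu xs x -> A x;
       forall x w : E, fle mu 0 x -> fle mu 0 w ->
         (forall n : nat, (1 <= n)%N -> A (fpos mu (n%:R *: x - w))) -> A x].
Proof.
move=> Hr Hi; tfae.
- exact: imp12.
- by move=> H xs x HA _ _; apply: H.
- exact: imp34.
- exact: imp41.
Qed.
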